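(* Let $E$ and $F$ be topological vector spaces over a valued field $\mathbb{K}$, $f\colon U\to F$ a continuous map on a subset $U\subseteq E$, $D\subseteq U$ a dense subset, and $\sigma>0$. If $f$ is not $C^{0,\sigma}$, then there exist $x_0\in U$ and a gauge $q$ on $F$ such that, for each neighbourhood $V\subseteq U$ of $x_0$ and each gauge $p$ on $E$, there exist $x,y\in V\cap D$ with $q(f(x)-f(y))>p(x-y)^\sigma$.
   Context: A valued field is a field with an absolute value $|.|$ defining a non-discrete topology; vector spaces are Hausdorff. A gauge on a topological $\mathbb{K}$-vector space $E$ is a map $q\colon E\to[0,\infty[$ with $q(tx)=|t|q(x)$ for $t\in\mathbb{K}$, $x\in E$, such that $\{x: q(x)<r\}$ is a $0$-neighbourhood for each $r>0$. A map $g\colon U\to F$ on $U\subseteq E$ is $C^{0,\sigma}$ if for every $x_0\in U$ and gauge $q$ on $F$ there exist a gauge $p$ on $E$ and a neighbourhood $V\subseteq U$ of $x_0$ with $q(g(y)-g(x))\le p(y-x)^\sigma$ for all $x,y\in V$. *)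

(* Defs.v *)
From HB Require Import structures.
From mathcomp Require Import all_boot all_order all_algebra.
From mathcomp Require Import all_classical all_reals topology exp.
Set Implicit Arguments. Unset Strict Implicit. Unset Printing Implicit Defensive.
Import Order.TTheory GRing.Theory Num.Theory.
Local Open Scope classical_set_scope.
Local Open Scope ring_scope.

Definition valued_field (R : realType) (K : fieldType) (abs : K -> R) : Prop :=
  [/\ (forall x, 0 <= abs x),
      (forall x, abs x = 0 <-> x = 0),
      (forall x y, abs (x * y) = abs x * abs y),
      (forall x y, abs (x + y) <= abs x + abs y)
    & (forall e : R, 0 < e -> exists x : K, x != 0 /\ abs x < e)].

HB.structure Definition TopLmod (K : pzRingType) :=
  {M of Topological M & GRing.Lmodule K M}.

(* E is a (Hausdorff) topological vector space over the valued field (K,abs):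
   addition E x E -> E is continuous, scalar multiplication K x E -> E is
   continuous (K carrying the topology induced by abs), and E is Hausdorff. *)
Definition is_tvs (R : realType) (K : fieldType) (abs : K -> R)
    (E : TopLmod.type K) : Prop :=
  [/\ continuous (fun z : E * E => z.1 + z.2),
      (forall (t : K) (x : E) (W : set E), nbhs (t *: x) W ->
         exists e : R, 0 < e /\ exists N : set E, nbhs x N /\
           forall (s : K) (y : E), abs (s - t) < e -> N y -> W (s *: y))
    & hausdorff_space E].

Definition gauge (R : realType) (K : fieldType) (abs : K -> R)
    (E : TopLmod.type K) (q : E -> R) : Prop :=
  [/\ (forall x, 0 <= q x),
      (forall (t : K) (x : E), q (t *: x) = abs t * q x)
    & (forall r : R, 0 < r -> nbhs (0 : E) [set x | q x < r])].

Definition rel_nbhs (T : topologicalType) (U : set T) (x0 : T) (V : set T) : Prop :=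
  V `<=` U /\ exists N : set T, nbhs x0 N /\ N `&` U `<=` V.

Definition dense_in (T : topologicalType) (U D : set T) : Prop :=
  D `<=` U /\ U `<=` closure D.

(* g : U -> F is C^{0,sigma} (g given as a total map, only values on U matter) *)
Definition C0sigma (R : realType) (K : fieldType) (abs : K -> R)
    (E F : TopLmod.type K) (U : set E) (g : E -> F) (sigma : R) : Prop :=
  forall x0 : E, U x0 -> forall q : F -> R, gauge abs q ->
    exists p : E -> R, gauge abs p /\
      exists V : set E, rel_nbhs U x0 V /\
        forall x y : E, V x -> V y -> q (g y - g x) <= powR (p (y - x)) sigma.

(* Main.v *)
Require Import Defs.
From HB Require Import structures.
From mathcomp Require Import all_boot all_order all_algebra.
From mathcomp Require Import all_classical all_reals topology exp.
Import Order.TTheory GRing.Theory Num.Theory.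
Local Open Scope classical_set_scope.
Local Open Scope ring_scope.
Set Implicit Arguments. Unset Strict Implicit.

Lemma subsub (G : zmodType) (a b c d : G) : (a - b) - (c - d) = (a - c) + (d - b).
Proof. by rewrite opprB [d - c]addrC addrACA (addrC (- b)). Qed.

Section Helpers.
Variables (R : realType) (K : fieldType) (abs : K -> R).
Hypothesis vf : valued_field abs.

Lemma abs_ge0 x : 0 <= abs x. Proof. by case: vf. Qed.
Lemma abs0 : abs 0 = 0. Proof. by case: vf => _ h _ _ _; apply/h. Qed.
Lemma absM x y : abs (x * y) = abs x * abs y. Proof. by case: vf. Qed.
Lemma abs_gt0 t : t != 0 -> 0 < abs t.
Proof.
move=> t0; rewrite lt_neqAle abs_ge0 andbT eq_sym; apply/eqP => h.
by case: vf => _ h2 _ _ _; move/eqP: t0; apply; apply/h2.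
Qed.
Lemma abs1 : abs 1 = 1.
Proof.
have h : abs 1 = abs 1 * abs 1 by rewrite -absM mulr1.
have p : 0 < abs 1 by apply: abs_gt0; exact: oner_neq0.
by apply: (mulIf (lt0r_neq0 p)); rewrite mul1r -h.
Qed.
Lemma absV t : t != 0 -> abs t^-1 = (abs t)^-1.
Proof.
move=> t0; have p := abs_gt0 t0.
apply: (mulfI (lt0r_neq0 p)); rewrite -absM mulfV // mulfV ?abs1 //.
exact: lt0r_neq0.
Qed.
Lemma small e : 0 < e -> exists t, t != 0 /\ abs t < e.
Proof. by case: vf => _ _ _ _ h; apply: h. Qed.

Variable E : TopLmod.type K.
Hypothesis tE : is_tvs abs E.

Lemma scale_cont (t : K) (x : E) W : nbhs (t *: x) W -> nbhs x [set y | W (t *: y)].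
Proof.
case: tE => _ h _ /h [e [e0 [N [nN HN]]]].
apply: filterS nN => y Ny; apply: HN => //; by rewrite subrr abs0.
Qed.

Lemma add_cont (x y : E) W : nbhs (x + y) W ->
  exists A B, nbhs x A /\ nbhs y B /\ forall a b, A a -> B b -> W (a + b).
Proof.
case: tE => h _ _ nW.
have := h (x, y) _ nW.
case=> -[A B] /= [nA nB] sub.
exists A, B; split => //; split => // a b Aa Bb.
exact: (sub (a, b)).
Qed.

Lemma transl (z : E) W : nbhs 0 W -> nbhs z [set w | W (w - z)].
Proof.
move=> nW; have : nbhs (z + - z) W by rewrite subrr.
case/add_cont => A [B [nA [nB H]]].
apply: filterS nA => w Aw; apply: H => //; exact: nbhs_singleton.
Qed.

Lemma negnbhs W : nbhs (0 : E) W -> nbhs (0 : E) [set w | W (- w)].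
Proof.
move=> nW; have : nbhs ((-1 : K) *: (0 : E)) W by rewrite scaler0.
by move/scale_cont; apply: filterS => w /=; rewrite scaleN1r.
Qed.

Definition scl (t : K) (C : set E) : set E := [set z | exists c, C c /\ z = t *: c].
Definition balanced (C : set E) := forall l z, abs l <= 1 -> C z -> C (l *: z).

Lemma scl_nbhs t C : t != 0 -> nbhs 0 C -> nbhs 0 (scl t C).
Proof.
move=> t0 nC; have : nbhs (t^-1 *: (0 : E)) C by rewrite scaler0.
move/scale_cont; apply: filterS => y Cy; exists (t^-1 *: y); split => //.
by rewrite scalerA mulfV // scale1r.
Qed.

Lemma absorb C (z : E) : nbhs 0 C -> exists t, t != 0 /\ scl t C z.
Proof.
move=> nC; have : nbhs ((0 : K) *: z) C by rewrite scale0r.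
case: tE => _ h _ /h [e [e0 [N [nN HN]]]].
have [s [s0 se]] := small e0.
have Csz : C (s *: z) by apply: HN; [rewrite subr0 | exact: nbhs_singleton].
exists s^-1; split; first by rewrite invr_eq0.
by exists (s *: z); split => //; rewrite scalerA mulVf // scale1r.
Qed.

Lemma balanced_nbhs (W : set E) : nbhs 0 W ->
  exists C, [/\ nbhs 0 C, balanced C & C `<=` W].
Proof.
move=> nW; have : nbhs ((0 : K) *: (0 : E)) W by rewrite scaler0.
case: tE => _ h _ /h [e [e0 [N [nN HN]]]].
exists [set z | exists s y, abs s < e /\ N y /\ z = s *: y]; split.
- have [s0 [s00 s0e]] := small e0.
  have : nbhs (s0^-1 *: (0 : E)) N by rewrite scaler0.
  move/scale_cont; apply: filterS => y Ny; exists s0, (s0^-1 *: y); split => //.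
  by split => //; rewrite scalerA mulfV // scale1r.
- move=> l z l1 [s [y [se [Ny ->]]]]; exists (l * s), y; split; last first.
    by split => //; rewrite scalerA.
  rewrite absM; apply: le_lt_trans se.
  by rewrite -[X in _ <= X]mul1r ler_wpM2r // abs_ge0.
- by move=> z [s [y [se [Ny ->]]]]; apply: HN => //; rewrite subr0.
Qed.

Lemma key (g : E -> R) C (u v : E) t s : gauge abs g -> balanced C ->
  (forall a b, C a -> C b -> g (a + b) < 1) -> t != 0 -> s != 0 ->
  scl t C u -> scl s C v -> g (u + v) < Num.max (abs t) (abs s).
Proof.
move=> gg bC HC.
wlog st : t s u v / abs s <= abs t.
  move=> W t0 s0 su sv; case/orP: (le_total (abs s) (abs t)) => st.
    exact: (W t s u v st t0 s0 su sv).
  by rewrite addrC maxC; apply: (W s t v u).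
move=> t0 s0 [c1 [Cc1 ->]] [c2 [Cc2 ->]].
have Cc2' : C ((s / t) *: c2).
  apply: bC => //; rewrite absM absV // ler_pdivrMr ?mul1r //; exact: abs_gt0.
have -> : s *: c2 = t *: ((s / t) *: c2).
  by rewrite scalerA mulrCA mulfV // mulr1.
rewrite -scalerDr; case: gg => _ hom _; rewrite hom.
have -> : Num.max (abs t) (abs s) = abs t by apply/max_idPl.
rewrite -[X in _ < X]mulr1 ltr_pM2l; [exact: HC | exact: abs_gt0].
Qed.

Lemma make_C (g : E -> R) : gauge abs g -> exists C,
  [/\ nbhs 0 C, balanced C & forall a b, C a -> C b -> g (a + b) < 1].
Proof.
move=> gg; have nW : nbhs (0 + 0 : E) [set x | g x < 1].
  by rewrite addr0; case: gg => _ _ h; apply: h.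
have [A [B [nA [nB H]]]] := add_cont nW.
have [C [nC bC sC]] := balanced_nbhs (filterI nA nB).
exists C; split => // a b Ca Cb; apply: H; [exact: (sC _ Ca).1 | exact: (sC _ Cb).2].
Qed.

Definition mkS (C : set E) (z : E) : set R :=
  [set r | exists t, t != 0 /\ scl t C z /\ r = abs t].
Definition mk (C : set E) (z : E) : R := inf (mkS C z).

Lemma mk_ne C z : nbhs 0 C -> mkS C z !=set0.
Proof. by move=> nC; have [t [t0 st]] := absorb z nC; exists (abs t), t. Qed.

Lemma mk_lb C z : lbound (mkS C z) 0.
Proof. by move=> r [t [_ [_ ->]]]; apply: abs_ge0. Qed.

Lemma mk_ge0 C z : nbhs 0 C -> 0 <= mk C z.
Proof. by move=> nC; apply: lb_le_inf; [exact: mk_ne | exact: mk_lb]. Qed.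

Lemma mk_le C z t : t != 0 -> scl t C z -> mk C z <= abs t.
Proof.
move=> t0 st; apply: ge_inf; first by exists 0; apply: mk_lb.
by exists t.
Qed.

Lemma mk_lt C z c : nbhs 0 C -> mk C z < c ->
  exists t, t != 0 /\ scl t C z /\ abs t < c.
Proof.
move=> nC /(inf_lt (mk_ne z nC)) [r [t [t0 [st ->]]]] tc.
by exists t.
Qed.

Lemma mk_gauge C : nbhs 0 C -> gauge abs (mk C).
Proof.
move=> nC; split.
- by move=> x; apply: mk_ge0.
- move=> t x; have [->|t0] := eqVneq t 0.
    rewrite scale0r abs0 mul0r; apply/eqP; rewrite eq_le mk_ge0 // andbT.
    rewrite leNgt; apply/negP => pos.
    have [s [s0 se]] := small pos.
    have : mk C 0 <= abs s.
      apply: mk_le => //; exists 0; split; last by rewrite scaler0.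
      exact: nbhs_singleton.
    by rewrite leNgt se.
  have ta := abs_gt0 t0.
  apply/eqP; rewrite eq_le; apply/andP; split.
  + rewrite leNgt; apply/negP => lt.
    have : mk C x < mk C (t *: x) / abs t by rewrite ltr_pdivlMr // mulrC.
    case/(mk_lt nC) => s [s0 [[c [Cc ->]] sl]].
    have : mk C (t *: (s *: c)) <= abs (t * s).
      apply: mk_le; first by rewrite mulf_neq0.
      by exists c; split => //; rewrite scalerA.
    rewrite absM leNgt; move: sl; rewrite ltr_pdivlMr // mulrC => ->; done.
  + rewrite leNgt; apply/negP => lt.
    case: (mk_lt nC lt) => s [s0 [[c [Cc e]] sl]].
    have : mk C x <= abs (t^-1 * s).
      apply: mk_le; first by rewrite mulf_neq0 // invr_eq0.
      exists c; split => //; rewrite -scalerA -e scalerA mulVf // scale1r //.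
    rewrite absM absV // leNgt mulrC -/(abs s / abs t) ltr_pdivrMr // mulrC sl //.
- move=> r r0; have [t [t0 tr]] := small r0.
  apply: filterS (scl_nbhs t0 nC) => z sz /=.
  exact: le_lt_trans (mk_le t0 sz) tr.
Qed.

End Helpers.

Unset Implicit Arguments. Set Strict Implicit.
Theorem lemma1p28 (R : realType) (K : fieldType) (abs : K -> R)
    (E F : TopLmod.type K) (U D : set E) (f : E -> F) (sigma : R) :
  valued_field abs -> is_tvs abs E -> is_tvs abs F ->
  {within U, continuous f} -> dense_in U D -> 0 < sigma ->
  ~ C0sigma abs U f sigma ->
  exists x0 : E, U x0 /\ exists q : F -> R, gauge abs q /\
    forall V : set E, rel_nbhs U x0 V ->
    forall p : E -> R, gauge abs p ->
      exists x y : E, (V `&` D) x /\ (V `&` D) y /\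
        powR (p (x - y)) sigma < q (f x - f y).
Proof.
move=> vf tE tF fc [DU UD] s0 nC.
have [x0 [Ux0 [q0 [gq0 H]]]] : exists x0, U x0 /\ exists q0 : F -> R, gauge abs q0 /\
   forall p : E -> R, gauge abs p -> forall V, rel_nbhs U x0 V ->
   exists x y, V x /\ V y /\ powR (p (y - x)) sigma < q0 (f y - f x).
  apply: contrapT => nE; apply: nC => x0 Ux0 q gq.
  apply: contrapT => nP; apply: nE; exists x0; split => //; exists q; split => // p gp V rV.
  apply: contrapT => nxy; apply: nP; exists p; split => //; exists V; split => // x y Vx Vy.
  rewrite leNgt; apply/negP => lt; apply: nxy; by exists x, y.
have [Cq [nCq bCq sCq]] := make_C vf tF gq0.
exists x0; split => //; exists (mk abs Cq); split; first exact: mk_gauge.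
move=> V [VU [N [nN NUV]]] p gp.
have [Cp [nCp bCp sCp]] := make_C vf tE gp.
pose p1 := mk abs Cp.
have gp1 : gauge abs p1 by exact: mk_gauge.
have gp' : gauge abs (fun z => 2 * p1 z).
  case: gp1 => h1 h2 h3; split.
  - by move=> x; rewrite mulr_ge0.
  - by move=> t x; rewrite h2 mulrCA.
  - move=> r r0; have : 0 < r / 2 by rewrite divr_gt0.
    move/h3; apply: filterS => z /=; rewrite ltr_pdivlMr // mulrC //.
have rV' : rel_nbhs U x0 (N° `&` U).
  split; first by move=> z [].
  by exists N°; split => //; exact: nbhs_interior.
have [x [y [[Nx Ux] [[Ny Uy] hlt]]]] := H _ gp' _ rV'.
set a := f y - f x; set b := y - x.
have qa0 : 0 < q0 a by apply: le_lt_trans hlt; apply: powR_ge0.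
have p1b0 : 0 <= p1 b by case: gp1.
have [c [p1c cq]] : exists c, p1 b < c /\ powR c sigma < q0 a.
  move: p1b0; rewrite le_eqVlt => /orP[/eqP p0|pb].
    exists (powR (q0 a / 2) sigma^-1); split.
      by rewrite -p0 powR_gt0 // divr_gt0.
    rewrite -powRrM mulVf ?gt_eqF // powRr1; last by rewrite divr_ge0 // ltW.
    by rewrite ltr_pdivrMr // ltr_pMr // ltr1n.
  exists (2 * p1 b); split => //.
  by rewrite ltr_pMl // ltr1n.
have c0 : 0 < c by apply: le_lt_trans p1c.
have [t [tn0 [sbt tc]]] := mk_lt vf tE nCp p1c.
have [t1 [t10 t1c]] := small vf c0.
have [t0 [t00 t0q]] := small vf qa0.
have P : forall b', scl t1 Cp (b' - b) -> powR (p b') sigma < q0 a.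
  move=> b' sb; have := key vf gp bCp sCp tn0 t10 sbt sb.
  rewrite addrC subrK => pb.
  have pbc : p b' < c by apply: lt_le_trans pb _; rewrite ge_max !ltW.
  apply: le_lt_trans cq; apply: ge0_ler_powR; rewrite ?ltW //.
    by rewrite nnegrE; case: gp.
  by rewrite nnegrE ltW.
have Q : forall a', scl t0 Cq (a - a') -> q0 a <= mk abs Cq a'.
  move=> a' sa; rewrite leNgt; apply/negP => lt.
  have [t2 [t20 [sa2 t2q]]] := mk_lt vf tF nCq lt.
  have := key vf gq0 bCq sCq t20 t00 sa2 sa.
  rewrite addrC subrK lt_max => /orP[h|h].
    by move: t2q; rewrite ltNge ltW.
  by move: t0q; rewrite ltNge ltW.
have [A [B [nA [nB HAB]]]] : exists A B, nbhs (0:E) A /\ nbhs (0:E) B /\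
    forall u v, A u -> B v -> scl t1 Cp (u + v).
  have := @add_cont _ _ _ _ tE 0 0 (scl t1 Cp); rewrite addr0; apply.
  exact: (scl_nbhs vf tE t10 nCp).
have [A2 [B2 [nA2 [nB2 HAB2]]]] : exists A B, nbhs (0:F) A /\ nbhs (0:F) B /\
    forall u v, A u -> B v -> scl t0 Cq (u + v).
  have := @add_cont _ _ _ _ tF 0 0 (scl t0 Cq); rewrite addr0; apply.
  exact: (scl_nbhs vf tF t00 nCq).
have nfy : nbhs (f y) [set w | A2 (f y - w)].
  have := transl tF (f y) (negnbhs vf tF nA2).
  by apply: filterS => w /=; rewrite opprB.
have nfx : nbhs (f x) [set w | B2 (w - f x)] by exact: (transl tF (f x) nB2).
have cf : forall z W, U z -> nbhs (f z) W -> nbhs z [set w | U w -> W (f w)].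
  move=> z W Uz nW; have := fc z W nW.
  case/(nbhs_subspace_ex _ Uz) => V' nV' e.
  apply: filterS nV' => w V'w Uw.
  have : (V' `&` U) w by [].
  by rewrite -e => -[].
have nMy : nbhs y (N° `&` ([set w | A (w - y)] `&` [set w | U w -> A2 (f y - f w)])).
  apply: filterI; first by apply: open_nbhs_nbhs; split => //; exact: open_interior.
  apply: filterI; first exact: (transl tE y nA).
  exact: (cf y _ Uy nfy).
have nMx : nbhs x (N° `&` ([set w | B (x - w)] `&` [set w | U w -> B2 (f w - f x)])).
  apply: filterI; first by apply: open_nbhs_nbhs; split => //; exact: open_interior.
  apply: filterI; last exact: (cf x _ Ux nfx).
  have := transl tE x (negnbhs vf tE nB).
  by apply: filterS => w /=; rewrite opprB.
have [y' [Dy' [Ny' [Ay' Fy']]]] := UD y Uy _ nMy.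
have [x' [Dx' [Nx' [Bx' Fx']]]] := UD x Ux _ nMx.
have Uy' := DU _ Dy'; have Ux' := DU _ Dx'.
have Vy' : V y' by apply: NUV; split => //; exact: interior_subset.
have Vx' : V x' by apply: NUV; split => //; exact: interior_subset.
exists y', x'; split; first by split.
split; first by split.
apply: lt_le_trans (Q _ _).
  apply: P; have := HAB _ _ Ay' Bx'.
  suff -> : (y' - y) + (x - x') = y' - x' - b by [].
  by rewrite /b subsub.
have := HAB2 _ _ (Fy' Uy') (Fx' Ux').
suff -> : (f y - f y') + (f x' - f x) = a - (f y' - f x') by [].
by rewrite /a subsub.
Qed.
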